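(* For every deterministic sink-finding algorithm $\mathcal{A}$ (in the vertex evaluation query model) and every $n\geq 2$, there exists an $n$-dimensional Matoušek-type USO on which $\mathcal{A}$ requires at least $n$ vertex evaluations to find the sink.
   Context: All vectors and matrices are over $GF(2)$; $\oplus$ denotes addition in $GF(2)$ (xor). The $n$-dimensional hypercube has vertex set $\{0,1\}^n$, and two vertices are adjacent iff they differ in exactly one coordinate. An orientation of the hypercube is given by an outmap function $o:\{0,1\}^n\to\{0,1\}^n$, where the edge $\{v,v\oplus e_i\}$ is directed away from $v$ iff $o(v)_i=1$; consistency requires $o(v)_i\neq o(v\oplus e_i)_i$ for all $v$ and $i$. A Unique Sink Orientation (USO) is an orientation in which every non-empty face of the hypercube has a unique sink (vertex with no outgoing edges within the face). An $n$-dimensional Matoušek-type USO is an orientation of the form $o(v)=M(v\oplus s)$ for all $v\in\{0,1\}^n$, where $M=PAP^T$ for some $n\times n$ permutation matrix $P$ and some invertible upper-triangular matrix $A\in\{0,1\}^{n\times n}$, and $s\in\{0,1\}^n$ (the sink). A sink-finding algorithm accesses the USO only through a vertex evaluation oracle: querying a vertex $v$ returns $o(v)$; its cost is the number of such queries, and it has found the sink when it can output the vertex $s$ with $o(s)=0$. *)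

(* Defs.v *)
From mathcomp Require Import all_boot all_algebra all_fingroup.
Set Implicit Arguments. Unset Strict Implicit. Unset Printing Implicit Defensive.
Import GRing.Theory.
Local Open Scope ring_scope.

(* Vertices of the n-cube: column vectors over GF(2); xor is + in 'F_2. *)
Definition vertex (n : nat) := 'cV['F_2]_n.

Definition outmap (n : nat) := vertex n -> vertex n.

Definition upper_triangular (n : nat) (A : 'M['F_2]_n) : Prop :=
  forall i j : 'I_n, (j < i)%N -> A i j = 0.

Definition matousek_uso (n : nat) (sigma : 'S_n) (A : 'M['F_2]_n) (s : vertex n)
  : outmap n :=
  fun v => (perm_mx sigma *m A *m (perm_mx sigma)^T) *m (v + s).

Definition is_matousek_uso (n : nat) (o : outmap n) (s : vertex n) : Prop :=
  exists (sigma : 'S_n) (A : 'M['F_2]_n),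
    [/\ upper_triangular A, A \in unitmx & o = matousek_uso sigma A s].

(* A deterministic algorithm in the vertex evaluation oracle model: given the
   history of (queried vertex, oracle answer) pairs so far, it either queries
   a further vertex or stops and outputs a vertex (its claimed sink). *)
Inductive step (n : nat) :=
  | Query of vertex n
  | Output of vertex n.

Definition algorithm (n : nat) := seq (vertex n * vertex n) -> step n.

Fixpoint exec (n : nat) (alg : algorithm n) (o : outmap n) (k : nat)
  (h : seq (vertex n * vertex n)) : option (vertex n) :=
  match alg h with
  | Output w => Some w
  | Query v =>
      match k with
      | 0 => None
      | k'.+1 => exec alg o k' (rcons h (v, o v))
      end
  end.

Definition finds_sink_within (n : nat) (alg : algorithm n) (o : outmap n)
  (s : vertex n) (k : nat) : Prop :=
  exec alg o k [::] = Some s.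

(* Main.v *)
Require Import Defs.
From mathcomp Require Import all_boot all_algebra all_fingroup.
From mathcomp Require Import zify.
From Stdlib Require Import Classical FunctionalExtensionality.
Set Implicit Arguments. Unset Strict Implicit. Unset Printing Implicit Defensive.
Import GRing.Theory.
Local Open Scope ring_scope.


Lemma matousek_of_order n (pi : 'S_n) (M : 'M['F_2]_n) (s : vertex n) :
  (forall i k, i != k -> M i k != 0 -> (pi i < pi k)%N) ->
  (forall i, M i i = 1) ->
  is_matousek_uso (fun v => M *m (v + s)) s.
Proof.
move=> Hord Hdiag.
pose A := \matrix_(a, b) M ((pi^-1)%g a) ((pi^-1)%g b).
exists pi, A; split.
- move=> i j ltji; rewrite mxE; apply/eqP; apply: contraT => Hnz.
  have Hne : (pi^-1)%g i != (pi^-1)%g j.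
    apply: contraTneq ltji => /perm_inj ->; by rewrite ltnn.
  have := Hord _ _ Hne Hnz; rewrite !permKV => /(ltn_trans ltji); by rewrite ltnn.
- rewrite unitmxE -det_tr det_trig.
    rewrite (eq_bigr (fun _ => 1)) ?big1_eq ?unitr1 // => i _.
    by rewrite !mxE Hdiag.
  apply/is_trig_mxP => i j ltij; rewrite !mxE; apply/eqP; apply: contraT => Hnz.
  have Hne : (pi^-1)%g j != (pi^-1)%g i.
    apply: contraTneq ltij => /perm_inj ->; by rewrite ltnn.
  have := Hord _ _ Hne Hnz; rewrite !permKV => /(ltn_trans ltij); by rewrite ltnn.
- rewrite /matousek_uso; apply: functional_extensionality => v; congr (_ *m _).
  rewrite -row_permE tr_perm_mx -col_permE; apply/matrixP => i k.
  by rewrite !mxE !permK.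
Qed.


Lemma fred n m (X : nat -> vertex n) (J : {set 'I_n}) :
  (forall c : nat -> 'F_2,
     (forall k, k \in J -> \sum_(r < m) c r * X r k 0 = 0) -> \sum_(r < m) c r = 0) ->
  exists phi : vertex n, (forall k, phi k 0 != 0 -> k \in J) /\
     forall r, (r < m)%N -> \sum_k phi k 0 * X r k 0 = 1.
Proof.
case: m => [|m] H.
  by exists 0; split => [k|//]; rewrite mxE eqxx.
pose B : 'M['F_2]_(m.+1, n) := \matrix_(r, k) (if k \in J then X r k 0 else 0).
have Hsub : ((const_mx 1 : 'rV['F_2]_(m.+1)) <= B^T)%MS.
  rewrite submxE; apply/eqP/matrixP => i l; rewrite !mxE.
  transitivity (\sum_(r < m.+1) cokermx B^T (inord r) l).
    by apply: eq_bigr => r _; rewrite mxE mul1r inord_val.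
  apply: (H (fun r : nat => cokermx B^T (inord r) l)) => k kJ.
  transitivity ((B^T *m cokermx B^T) k l); last by rewrite mulmx_coker mxE.
  by rewrite mxE; apply: eq_bigr => r _; rewrite inord_val !mxE kJ mulrC.
case/submxP: Hsub => D HD.
exists (\col_k (if k \in J then D 0 k else 0)); split.
  by move=> k; rewrite mxE; case: ifP => //; rewrite eqxx.
move=> r Hr.
have := congr1 (fun M : 'rV['F_2]_(m.+1) => M 0 (Ordinal Hr)) HD; rewrite !mxE => ->.
apply: eq_bigr => k _; rewrite !mxE; by case: ifP; rewrite ?mul0r ?mulr0.
Qed.


Lemma F2_cases (x : 'F_2) : x = 0 \/ x = 1.
Proof. case: x => [[|[|//]] ?]; [left|right]; exact: val_inj. Qed.

Definition upd n (sg : vertex n) (j : 'I_n) (b : 'F_2) : vertex n :=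
  \col_i (if i == j then b else sg i 0).

Lemma upd_ne n (sg : vertex n) j b k : k != j -> upd sg j b k 0 = sg k 0.
Proof. by rewrite mxE => /negbTE ->. Qed.
Lemma upd_eq n (sg : vertex n) j b : upd sg j b j 0 = b.
Proof. by rewrite mxE eqxx. Qed.

Definition Inv n (J : {set 'I_n}) (sg : vertex n) (Q : seq (vertex n)) :=
  forall c : nat -> 'F_2,
    (forall k, k \in J ->
       \sum_(r < size Q) c r * nth 0 Q r k 0 + (\sum_(r < size Q) c r) * sg k 0 = 0) ->
    \sum_(r < size Q) c r = 0 /\ forall k, \sum_(r < size Q) c r * nth 0 Q r k 0 = 0.

Lemma sum_rcons T (x0 : T) (Q : seq T) v (F : nat -> T -> 'F_2) :
  \sum_(r < size (rcons Q v)) F r (nth x0 (rcons Q v) r) =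
  \sum_(r < size Q) F r (nth x0 Q r) + F (size Q) v.
Proof.
rewrite size_rcons big_ord_recr /= nth_rcons ltnn eqxx; congr (_ + _).
by apply: eq_bigr => r _; rewrite nth_rcons ltn_ord.
Qed.

Lemma sum_rcons' T (Q : seq T) v (F : nat -> 'F_2) :
  \sum_(r < size (rcons Q v)) F r = \sum_(r < size Q) F r + F (size Q).
Proof. by rewrite size_rcons big_ord_recr. Qed.

Lemma notin_exists n (J : {set 'I_n}) : (#|J| < n)%N -> exists j, j \notin J.
Proof.
move=> H; case: (pickP [pred j | j \notin J]) => [j Hj|H0]; first by exists j.
suff : J = setT by move=> E; move: H; rewrite E cardsT card_ord ltnn.
by apply/setP => i; rewrite inE; have := H0 i; rewrite /= => /negbFE.
Qed.

Lemma F2_eq0 (x y : 'F_2) : x + y = 0 -> x = y.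
Proof. by case: (F2_cases x) => ->; case: (F2_cases y) => -> /eqP. Qed.

Lemma sumD n (c d : nat -> 'F_2) (f : nat -> 'F_2) :
  \sum_(r < n) (c r + d r) * f r = \sum_(r < n) c r * f r + \sum_(r < n) d r * f r.
Proof. by rewrite -big_split; apply: eq_bigr => r _; rewrite mulrDl. Qed.
Lemma sumD' n (c d : nat -> 'F_2) :
  \sum_(r < n) (c r + d r) = \sum_(r < n) c r + \sum_(r < n) d r.
Proof. by rewrite -big_split. Qed.

Ltac f2c :=
  repeat (let H := fresh "H" in move=> H; move/eqP: H => H; try discriminate H);
  try (apply/eqP; done).

Lemma F2_neq0 (x : 'F_2) : x != 0 -> x = 1.
Proof. by case: (F2_cases x) => ->. Qed.

Lemma f2_lemA (A' B' A0 B0 vk sk : 'F_2) :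
  A0 + B0 * sk + (vk + sk) = 0 -> A' + 1 * vk + (B' + 1) * sk = 0 ->
  (A' + A0) + (B' + B0) * sk = 0.
Proof.
by case: (F2_cases A') => ->; case: (F2_cases B') => ->; case: (F2_cases A0) => ->;
  case: (F2_cases B0) => ->; case: (F2_cases vk) => ->; case: (F2_cases sk) => ->; f2c.
Qed.

Lemma f2_lemB (x y z b : 'F_2) : (x + y) + (z + 1) * b = 1 -> x + 1 * y + (z + 1) * b = 0 -> False.
Proof.
by case: (F2_cases x) => ->; case: (F2_cases y) => ->; case: (F2_cases z) => ->;
  case: (F2_cases b) => ->; f2c.
Qed.

Lemma f2_lemC (x y z s : 'F_2) : x + 1 * y + (z + 1) * s = 0 -> x + z * s + (y + s) = 0.
Proof.
by case: (F2_cases x) => ->; case: (F2_cases y) => ->; case: (F2_cases z) => ->;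
  case: (F2_cases s) => ->; f2c.
Qed.

Lemma f2_lemD (x : 'F_2) : x + 1 * (1 + x) = 1.
Proof. by case: (F2_cases x) => ->; f2c. Qed.

Lemma inv_ext n J sg Q (v : vertex n) : Inv J sg Q -> (#|J| < n)%N ->
  exists j b, j \notin J /\ Inv (j |: J) (upd sg j b) (rcons Q v).
Proof.
move=> HI HJ; have [j0 j0J] := notin_exists HJ.
have inJ k : k \in J -> k != j0 by apply: contraTneq => ->.
case: (classic (exists c0 : nat -> 'F_2, forall k, k \in J ->
   \sum_(r < size Q) c0 r * nth 0 Q r k 0 + (\sum_(r < size Q) c0 r) * sg k 0
   + (v k 0 + sg k 0) = 0)) => [[c0 H0]|Hno].
- pose a := \sum_(r < size Q) c0 r + 1.
  pose q k := \sum_(r < size Q) c0 r * nth 0 Q r k 0 + v k 0.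
  have qJ k : k \in J -> q k + a * sg k 0 = 0.
    move=> kJ; rewrite -(H0 k kJ) /q /a.
    case: (F2_cases (\sum_(r < size Q) c0 r * nth 0 Q r k 0)) => ->;
    case: (F2_cases (\sum_(r < size Q) c0 r)) => ->;
    by case: (F2_cases (v k 0)) => ->; case: (F2_cases (sg k 0)) => ->; apply/eqP.
  suff [j [b [jJ Pjb]]] : exists j b, j \notin J /\
      (q j + a * b = 1 \/ (a = 0 /\ forall k, q k = 0)).
    exists j, b; split => // c' Hc'.

    have jJ' k : k \in J -> k != j by apply: contraTneq => ->.
    suff [E1 E2] : \sum_(r < size Q) c' r + c' (size Q) = 0 /\ forall k,
        \sum_(r < size Q) c' r * nth 0 Q r k 0 + c' (size Q) * v k 0 = 0.
      split; first by rewrite sum_rcons'.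
      by move=> k; rewrite (sum_rcons 0 Q v (fun r x => c' r * x k 0)).
    have Hc k : k \in J -> \sum_(r < size Q) c' r * nth 0 Q r k 0 + c' (size Q) * v k 0
         + (\sum_(r < size Q) c' r + c' (size Q)) * sg k 0 = 0.
      move=> kJ; have := Hc' k; rewrite !in_setU1 kJ orbT => /(_ isT).
      by rewrite sum_rcons' (sum_rcons 0 Q v (fun r x => c' r * x k 0)) upd_ne ?jJ'.
    case: (F2_cases (c' (size Q))) => Ecm.
    + have [H1 H2] : \sum_(r < size Q) c' r = 0 /\
          forall k, \sum_(r < size Q) c' r * nth 0 Q r k 0 = 0.
        by apply: HI => k kJ; have := Hc k kJ; rewrite Ecm !mul0r !addr0.
      rewrite Ecm H1 addr0; split=> [//|k]; by rewrite H2 mul0r addr0.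
    + have Hd : forall k, k \in J -> \sum_(r < size Q) (c' r + c0 r) * nth 0 Q r k 0
          + (\sum_(r < size Q) (c' r + c0 r)) * sg k 0 = 0.
        move=> k kJ; rewrite (@sumD _ c' c0 (fun r => nth 0 Q r k 0)) sumD'; have := Hc k kJ; have := H0 k kJ; rewrite Ecm.
        exact: f2_lemA.
      have [H1 H2] := HI (fun r => c' r + c0 r) Hd.
      move: H1; rewrite sumD' => /F2_eq0 E1.
      have E2 k : \sum_(r < size Q) c' r * nth 0 Q r k 0 = \sum_(r < size Q) c0 r * nth 0 Q r k 0.
        by apply: F2_eq0; rewrite -(@sumD _ c' c0 (fun r => nth 0 Q r k 0)) H2.
      case: Pjb => [Hj | [Ha Hq]].
      * exfalso; have := Hc' j; rewrite setU11 => /(_ isT).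
        rewrite sum_rcons' (sum_rcons 0 Q v (fun r x => c' r * x j 0)) upd_eq Ecm E1 E2.
        by move: Hj; rewrite /q /a; apply: f2_lemB.
      * rewrite Ecm E1; split; first exact: Ha.
        by move=> k; rewrite E2 mul1r; apply: Hq.
  case: (F2_cases a) => Ea.
  + case: (pickP (fun k => q k != 0)) => [j Hj | Hall].
    * exists j, 0; split.
        apply/negP => jJ; have := qJ j jJ; rewrite Ea mul0r addr0 => Eq.
        by move: Hj; rewrite /= Eq eqxx.
      by left; rewrite mulr0 addr0; apply: F2_neq0.
    * exists j0, 0; split => //; right; split => // k.
      by have := Hall k; rewrite /= => /negbFE/eqP.
  + exists j0, (1 + q j0); split => //; left; rewrite Ea; exact: f2_lemD.
- exists j0, 0; split => // c' Hc'.
  suff [E1 E2] : \sum_(r < size Q) c' r + c' (size Q) = 0 /\ forall k,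
      \sum_(r < size Q) c' r * nth 0 Q r k 0 + c' (size Q) * v k 0 = 0.
    split; first by rewrite sum_rcons'.
    by move=> k; rewrite (sum_rcons 0 Q v (fun r x => c' r * x k 0)).
  have Hc k : k \in J -> \sum_(r < size Q) c' r * nth 0 Q r k 0 + c' (size Q) * v k 0
       + (\sum_(r < size Q) c' r + c' (size Q)) * sg k 0 = 0.
    move=> kJ; have := Hc' k; rewrite !in_setU1 kJ orbT => /(_ isT).
    by rewrite sum_rcons' (sum_rcons 0 Q v (fun r x => c' r * x k 0)) upd_ne ?inJ.
  case: (F2_cases (c' (size Q))) => Ecm.
  + have [H1 H2] : \sum_(r < size Q) c' r = 0 /\
        forall k, \sum_(r < size Q) c' r * nth 0 Q r k 0 = 0.
      by apply: HI => k kJ; have := Hc k kJ; rewrite Ecm !mul0r !addr0.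
    rewrite Ecm H1 addr0; split=> [//|k]; by rewrite H2 mul0r addr0.
  + exfalso; apply: Hno; exists c' => k kJ; have := Hc k kJ; rewrite Ecm.
    exact: f2_lemC.
Qed.


Lemma F2_addxx (x : 'F_2) : x + x = 0.
Proof. by case: (F2_cases x) => ->; f2c. Qed.

Record st n := St { sJ : {set 'I_n}; ssg : vertex n; srho : 'M['F_2]_n;
                    sphi : vertex n; spi : 'S_n }.

Definition dot n (a b : vertex n) : 'F_2 := \sum_k a k 0 * b k 0.

Definition Nmat n (S : st n) (s : vertex n) : 'M['F_2]_n :=
  \matrix_(i, k) (if i \in sJ S then srho S i k else s i 0 * sphi S k 0).

Definition oS n (S : st n) (s : vertex n) : outmap n :=
  fun v => (1%:M + Nmat S s) *m (v + s).

Definition ans n (S : st n) (v : vertex n) : vertex n :=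
  \col_i (if i \in sJ S then (v + ssg S) i 0 + \sum_k srho S i k * (v + ssg S) k 0
          else v i 0).

Definition valid n (S : st n) (h : seq (vertex n * vertex n)) :=
 [/\ (forall i k, i \in sJ S -> srho S i k != 0 -> (k \in sJ S) && (spi S i < spi S k)%N),
     (forall k, sphi S k 0 != 0 -> k \in sJ S),
     (forall i, (i \in sJ S) = (n - #|sJ S| <= spi S i)%N),
     (forall p, p \in h -> dot (sphi S) (p.1 + ssg S) = 1) &
     ((forall p, p \in h -> ans S p.1 = p.2) /\
     Inv (sJ S) (ssg S) (map fst h))].

Lemma mulF2_neq0 (x y : 'F_2) : x * y != 0 -> y != 0.
Proof. by apply: contra => /eqP ->; rewrite mulr0. Qed.

Lemma oS_matousek n (S : st n) h s : valid S h -> is_matousek_uso (oS S s) s.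
Proof.
case=> W1 W2 W3 _ _.
have HN i k : (if i \in sJ S then srho S i k else s i 0 * sphi S k 0) != 0 ->
    (spi S i < spi S k)%N.
  case: ifP => iJ.
    by move=> /(W1 _ _ iJ) /andP [].
  move=> /mulF2_neq0 /W2 kJ.
  move: (W3 i) (W3 k); rewrite iJ kJ => /esym/negbT; rewrite -ltnNge => H1 /esym H2.
  exact: (leq_trans H1 H2).
apply: (@matousek_of_order n (spi S)).
  move=> i k ik; rewrite !mxE (negbTE ik) add0r; exact: HN.
move=> i; rewrite !mxE eqxx.
case: (eqVneq (if i \in sJ S then srho S i i else s i 0 * sphi S i 0) 0) => [->|/HN];
  first by rewrite addr0.
by rewrite ltnn.
Qed.

Lemma sum_supp n (f : 'I_n -> 'F_2) (x a a' : vertex n) :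
  (forall k, f k != 0 -> a k 0 = a' k 0) ->
  \sum_k f k * (x + a) k 0 = \sum_k f k * (x + a') k 0.
Proof.
move=> H; apply: eq_bigr => k _; case: (eqVneq (f k) 0) => [->|/H Hk].
  by rewrite !mul0r.
by rewrite !mxE Hk.
Qed.

Lemma ansE n (S : st n) h (s v : vertex n) : valid S h ->
  (forall i, i \in sJ S -> s i 0 = ssg S i 0) ->
  dot (sphi S) (v + ssg S) = 1 -> oS S s v = ans S v.
Proof.
case=> W1 W2 _ _ _ Hs Hd.
rewrite /oS mulmxDl mul1mx; apply/matrixP => i l; rewrite (ord1 l) !mxE.
case: ifP => iJ.
  rewrite Hs //; congr (_ + _).
  rewrite -(sum_supp _ (a := s)); last first.
    by move=> k /(W1 _ _ iJ) /andP [kJ _]; rewrite Hs.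
  by apply: eq_bigr => k _; rewrite !mxE iJ.
have -> : \sum_j (Nmat S s) i j * (v + s) j 0 = s i 0 * dot (sphi S) (v + s).
  rewrite /dot mulr_sumr; apply: eq_bigr => k _; by rewrite !mxE iJ mulrA.
have -> : dot (sphi S) (v + s) = dot (sphi S) (v + ssg S).
  by apply: sum_supp => k /W2 kJ; rewrite Hs.
by rewrite Hd mulr1 -addrA F2_addxx addr0.
Qed.

Lemma sumX n (Q : seq (vertex n)) (c : nat -> 'F_2) (sg : vertex n) k :
  \sum_(r < size Q) c r * (nth 0 Q r + sg) k 0 =
  \sum_(r < size Q) c r * nth 0 Q r k 0 + (\sum_(r < size Q) c r) * sg k 0.
Proof.
rewrite mulr_suml -big_split; apply: eq_bigr => r _; by rewrite mxE mulrDr.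
Qed.

Lemma step n (S : st n) h v : valid S h -> (#|sJ S| < n)%N ->
  exists S' : st n, valid S' (rcons h (v, ans S' v)) /\ #|sJ S'| = (#|sJ S|).+1.
Proof.
move=> HV HJ; have HV' := HV; case: HV' => W1 W2 W3 W4 [W5 W6].
have [j [b [jJ HI']]] := inv_ext v W6 HJ.
set J := sJ S; set sg := ssg S; set pi := spi S; set phi := sphi S.
set J' := j |: J; set sg' := upd sg j b.
set Q' := rcons (map fst h) v.
have [phi' [Hp1 Hp2]] := @fred n (size Q') (fun r => nth 0 Q' r + sg') J'
   (fun c Hc => proj1 (HI' c (fun k kJ => etrans (esym (sumX _ _ _ _)) (Hc k kJ)))).
have Hpos : (n - #|J| - 1 < n)%N by move: HJ; rewrite /J; lia.
set u := (pi^-1)%g (Ordinal Hpos).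
have piu : pi u = Ordinal Hpos by rewrite /u permKV.
have uJ : u \notin J.
  rewrite W3 -/pi piu /=; move: HJ; rewrite /J; move: (#|sJ S|) => c; lia.
have jpi : (pi j < n - #|J|)%N by move: (W3 j); rewrite (negbTE jJ) ltnNge => <-.
pose rho' := \matrix_(i, k) (if i == j then b * phi k 0 else srho S i k).
pose pi' := (tperm j u * pi)%g.
have pi'E x : pi' x = pi (tperm j u x) by rewrite permM.
have pi'j : pi' j = Ordinal Hpos by rewrite pi'E tpermL.
have pi'J x : x \in J -> pi' x = pi x.
  by move=> xJ; rewrite pi'E tpermD //; apply: contraTneq xJ => <-.
have sgJ k : k \in J -> sg' k 0 = sg k 0.
  by move=> kJ; rewrite upd_ne //; apply: contraTneq kJ => ->.
have Hcard : #|J'| = (#|J|).+1 by rewrite cardsU1 jJ.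
exists (St J' sg' rho' phi' pi'); split; last exact: Hcard.
have ans_ext x : dot phi (x + sg) = 1 -> ans (St J' sg' rho' phi' pi') x = ans S x.
  move=> Hd; apply/matrixP => i l; rewrite (ord1 l) !mxE /=.
  rewrite in_setU1; case: (eqVneq i j) => [->|ij] /=.
    rewrite -/J (negbTE jJ).
    have -> : \sum_k rho' j k * (x + sg') k 0 = b * dot phi (x + sg).
      rewrite /dot mulr_sumr; apply: eq_bigr => k _; rewrite !mxE eqxx -mulrA.
      case: (eqVneq (phi k 0) 0) => [->|/W2 kJ]; first by rewrite !mul0r mulr0.
      have kj : k != j by apply: contraTneq kJ => ->.
      by rewrite (negbTE kj).
    by rewrite Hd mulr1 -addrA F2_addxx addr0.
  rewrite -/J; case: ifP => iJ //.
  congr (_ + _).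
  transitivity (\sum_k srho S i k * (x + sg') k 0).
    by apply: eq_bigr => k _; rewrite [rho' i k]mxE (negbTE ij).
  apply: sum_supp => k /(W1 _ _ iJ) /andP [kJ _]; exact: sgJ.
have memh p : p \in rcons h (v, ans (St J' sg' rho' phi' pi') v) ->
    p = (v, ans (St J' sg' rho' phi' pi') v) \/ p \in h.
  by rewrite mem_rcons in_cons => /orP [/eqP ->|]; [left|right].
split => /=.
- move=> i k; rewrite in_setU1 mxE; case: (eqVneq i j) => [->|ij] /=.
    move=> _ /mulF2_neq0 /W2 kJ; rewrite in_setU1 kJ orbT /=.
    rewrite pi'j pi'J // -/pi /=; move: (W3 k) HJ; rewrite kJ -/pi /J => /esym; move: (#|sJ S|) (nat_of_ord (pi k)) => c p; lia.
  move=> iJ /(W1 _ _ iJ) /andP [kJ Hlt]; rewrite in_setU1 kJ orbT /=.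
  have iu : i != u by apply: contraTneq iJ => ->.
  have ij' : i != j by [].
  by rewrite !pi'J.
- exact: Hp1.
- move=> i; rewrite Hcard in_setU1; case: (eqVneq i j) => [->|ij] /=.
    by rewrite pi'j /=; lia.
  case: (eqVneq i u) => [Eiu|iu].
    rewrite Eiu in ij *.
    rewrite (negbTE uJ) pi'E tpermR.
    have Hne : (pi j : nat) != pi u.
      by rewrite val_eqE; apply/eqP => /perm_inj E; move: ij; rewrite E eqxx.
    move: Hne jpi; rewrite piu /=; move: (#|J|) (nat_of_ord (pi j)) => c p; lia.
  rewrite pi'E tpermD 1?eq_sym // W3 -/pi.
  have Hne : (pi i : nat) != pi u.
    by rewrite val_eqE; apply/eqP => /perm_inj E; move: iu; rewrite E eqxx.
  by move: Hne; rewrite piu /=; move: (#|J|) (nat_of_ord (pi i)) => c p; lia.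
- move=> p /memh [->|ph] /=.
    have := Hp2 (size h); rewrite /Q' size_rcons size_map ltnSn => /(_ isT).
    by rewrite nth_rcons size_map ltnn eqxx.
  have Hi : (index p h < size h)%N by rewrite index_mem.
  have := Hp2 (index p h); rewrite /Q' size_rcons size_map ltnS ltnW // => /(_ isT).
  by rewrite nth_rcons size_map Hi (nth_map p) // nth_index.
- split.
    move=> p /memh [->|ph] //=.
    by rewrite ans_ext ?W4 // W5.
  by rewrite map_rcons.
Qed.

Lemma exec_out n (alg : algorithm n) o k h w : alg h = Output w -> exec alg o k h = Some w.
Proof. by case: k => [|k] /= ->. Qed.

Lemma exec_query n (alg : algorithm n) o k h v : alg h = Query v ->
  exec alg o k.+1 h = exec alg o k (rcons h (v, o v)).
Proof. by move=> /= ->. Qed.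

Lemma main n (alg : algorithm n) k : (0 < n)%N -> forall (S : st n) h, valid S h ->
  (#|sJ S| + k <= n.-1)%N ->
  exists o s, is_matousek_uso o s /\ (forall p, p \in h -> o p.1 = p.2) /\
              exec alg o k h <> Some s.
Proof.
move=> n0; elim: k => [|k IH] S h HV Hb.
all: have HV' := HV; case: HV' => W1 W2 W3 W4 [W5 W6].
all: have cons (s : vertex n) : (forall i, i \in sJ S -> s i 0 = ssg S i 0) ->
       forall p, p \in h -> oS S s p.1 = p.2
       by move=> Hs p ph; rewrite (ansE HV Hs (W4 p ph)) W5.
all: have HJ : (#|sJ S| < n)%N by move: Hb; lia.
all: case Ealg: (alg h) => [v|w].
- exists (oS S (ssg S)), (ssg S); split; first exact: oS_matousek HV.
  by split; [exact: cons | rewrite /= Ealg].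
- have [i iJ] := notin_exists HJ.
  pose s := upd (ssg S) i (1 + w i 0).
  have Hs : forall kk, kk \in sJ S -> s kk 0 = ssg S kk 0.
    by move=> kk kJ; rewrite upd_ne //; apply: contraTneq kJ => ->.
  exists (oS S s), s; split; first exact: oS_matousek HV.
  split; first exact: cons.
  rewrite /= Ealg => [[]] E.
  by have := upd_eq (ssg S) i (1 + w i 0); rewrite -/s -E; case: (F2_cases (w i 0)) => ->; f2c.
- have [S' [HV2 Hc]] := step v HV HJ.
  have Hb' : (#|sJ S'| + k <= n.-1)%N by move: Hb; rewrite Hc; lia.
  have [o [s [Ho [Hcons Hex]]]] := IH S' _ HV2 Hb'.
  exists o, s; split => //; split.
    by move=> p ph; apply: Hcons; rewrite mem_rcons in_cons ph orbT.
  have Eo : o v = ans S' v by apply: (Hcons (v, ans S' v)); rewrite mem_rcons mem_head.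
  by rewrite /= Ealg Eo.
- have [i iJ] := notin_exists HJ.
  pose s := upd (ssg S) i (1 + w i 0).
  have Hs : forall kk, kk \in sJ S -> s kk 0 = ssg S kk 0.
    by move=> kk kJ; rewrite upd_ne //; apply: contraTneq kJ => ->.
  exists (oS S s), s; split; first exact: oS_matousek HV.
  split; first exact: cons.
  rewrite /= Ealg => [[]] E.
  by have := upd_eq (ssg S) i (1 + w i 0); rewrite -/s -E; case: (F2_cases (w i 0)) => ->; f2c.
Qed.

Theorem theorem1 (n : nat) (alg : algorithm n) :
  (2 <= n)%N ->
  exists (o : outmap n) (s : vertex n),
    is_matousek_uso o s /\ ~ finds_sink_within alg o s n.-1.
Proof.
move=> n2.
have n0 : (0 < n)%N by apply: leq_trans n2.
pose S0 := St (set0 : {set 'I_n}) 0 0 0 1%g.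
have HV : valid S0 [::].
  split => //=.
  - by move=> i k; rewrite inE.
  - by move=> k; rewrite mxE eqxx.
  - by move=> i; rewrite inE cards0 subn0 perm1 leqNgt ltn_ord.
  - split => //; move=> c _; rewrite /= !big_ord0; split => // k; by rewrite big_ord0.
have Hb : (#|sJ S0| + n.-1 <= n.-1)%N by rewrite cards0.
have [o [s [Ho [_ Hex]]]] := main alg n0 HV Hb.
by exists o, s; split.
Qed.
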